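(* Every complex Hilbert space $H$ of finite dimension $n\ge2$ admits a bounded linear operator $T$ and a nontrivial subspace $\mathcal{M}$ of $H$ such that $T$ is $\mathcal{M}$-diskcyclic.
   Context: $\mathbb{D}=\{\alpha\in\mathbb{C}:|\alpha|\le1\}$. A subspace is nontrivial if it is neither $\{0\}$ nor the whole space. $T$ is $\mathcal{M}$-diskcyclic if there is $x\in H$ with $\{\alpha T^mx:\alpha\in\mathbb{D},m=0,1,2,\dots\}\cap\mathcal{M}$ dense in $\mathcal{M}$. *)

(* Defs.v *)
From Stdlib Require Import Reals.
Open Scope R_scope.

Record C := mkC { Re : R; Im : R }.
Definition C0 : C := mkC 0 0.
Definition C1 : C := mkC 1 0.
Definition Cadd (a b : C) : C := mkC (Re a + Re b) (Im a + Im b).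
Definition Cmul (a b : C) : C :=
  mkC (Re a * Re b - Im a * Im b) (Re a * Im b + Im a * Re b).
Definition Cconj (a : C) : C := mkC (Re a) (- Im a).
Definition Cmod (a : C) : R := sqrt (Re a * Re a + Im a * Im a).

Record HilbertSpace := {
  V :> Type;
  vadd : V -> V -> V;
  vzero : V;
  vopp : V -> V;
  vscal : C -> V -> V;
  inner : V -> V -> C;
  vadd_assoc : forall x y z, vadd x (vadd y z) = vadd (vadd x y) z;
  vadd_comm : forall x y, vadd x y = vadd y x;
  vadd_0 : forall x, vadd x vzero = x;
  vadd_opp : forall x, vadd x (vopp x) = vzero;
  vscal_assoc : forall a b x, vscal a (vscal b x) = vscal (Cmul a b) x;
  vscal_1 : forall x, vscal C1 x = x;
  vscal_distr_v : forall a x y, vscal a (vadd x y) = vadd (vscal a x) (vscal a y);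
  vscal_distr_s : forall a b x, vscal (Cadd a b) x = vadd (vscal a x) (vscal b x);
  inner_add_l : forall x y z, inner (vadd x y) z = Cadd (inner x z) (inner y z);
  inner_scal_l : forall a x y, inner (vscal a x) y = Cmul a (inner x y);
  inner_conj_sym : forall x y, inner y x = Cconj (inner x y);
  inner_pos : forall x, 0 <= Re (inner x x);
  inner_def : forall x, inner x x = C0 -> x = vzero;
  complete : forall u : nat -> V,
    (forall eps, eps > 0 -> exists N, forall p q, (p >= N)%nat -> (q >= N)%nat ->
       sqrt (Re (inner (vadd (u p) (vopp (u q))) (vadd (u p) (vopp (u q))))) < eps) ->
    exists l : V, forall eps, eps > 0 -> exists N, forall p, (p >= N)%nat ->
       sqrt (Re (inner (vadd (u p) (vopp l)) (vadd (u p) (vopp l)))) < eps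
}.

Arguments vadd {h}. Arguments vzero {h}. Arguments vopp {h}.
Arguments vscal {h}. Arguments inner {h}.

Definition vnorm {H : HilbertSpace} (x : H) : R := sqrt (Re (inner x x)).
Definition vsub {H : HilbertSpace} (x y : H) : H := vadd x (vopp y).

Fixpoint lincomb {H : HilbertSpace} (n : nat) (c : nat -> C) (e : nat -> H) : H :=
  match n with
  | O => vzero
  | S k => vadd (lincomb k c e) (vscal (c k) (e k))
  end.

Definition has_dim (H : HilbertSpace) (n : nat) : Prop :=
  exists e : nat -> H,
    (forall c : nat -> C, lincomb n c e = vzero -> forall i, (i < n)%nat -> c i = C0) /\
    (forall x : H, exists c : nat -> C, x = lincomb n c e).

Definition bounded_linear {H : HilbertSpace} (T : H -> H) : Prop :=
  (forall x y, T (vadd x y) = vadd (T x) (T y)) /\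
  (forall a x, T (vscal a x) = vscal a (T x)) /\
  (exists K : R, forall x, vnorm (T x) <= K * vnorm x).

Definition subspace {H : HilbertSpace} (M : H -> Prop) : Prop :=
  M vzero /\ (forall x y, M x -> M y -> M (vadd x y)) /\
  (forall a x, M x -> M (vscal a x)).

Definition nontrivial {H : HilbertSpace} (M : H -> Prop) : Prop :=
  (exists x, M x /\ x <> vzero) /\ (exists x, ~ M x).

Definition dense_in {H : HilbertSpace} (A M : H -> Prop) : Prop :=
  forall y, M y -> forall eps, eps > 0 -> exists z, A z /\ vnorm (vsub z y) < eps.

Definition disk_orbit {H : HilbertSpace} (T : H -> H) (x : H) (z : H) : Prop :=
  exists (alpha : C) (m : nat), Cmod alpha <= 1 /\ z = vscal alpha (Nat.iter m T x).

Definition M_diskcyclic {H : HilbertSpace} (T : H -> H) (M : H -> Prop) : Prop :=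
  exists x : H, dense_in (fun z => disk_orbit T x z /\ M z) M.

(* Main.v *)
Require Import Defs.
From Stdlib Require Import Reals Lra Lia.
Open Scope R_scope.

Definition c2 : Defs.C := mkC 2 0.
Definition cr (r : R) : Defs.C := mkC r 0.

Lemma vscal0 (H : HilbertSpace) (x : H) : vscal Defs.C0 x = vzero.
Proof.
  assert (E : vscal (Cadd Defs.C0 Defs.C0) x = vadd (vscal Defs.C0 x) (vscal Defs.C0 x)) by apply vscal_distr_s.
  replace (Cadd Defs.C0 Defs.C0) with Defs.C0 in E by (unfold Cadd, Defs.C0; simpl; f_equal; ring).
  set (u := vscal Defs.C0 x) in *.
  transitivity (vadd (vadd u u) (vopp u)).
  - rewrite <- vadd_assoc, vadd_opp, vadd_0. reflexivity.
  - rewrite <- E. apply vadd_opp.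
Qed.

Lemma inner00 (H : HilbertSpace) : Re (@inner H vzero vzero) = 0.
Proof.
  rewrite <- (vscal0 H vzero) at 1. rewrite inner_scal_l. simpl. ring.
Qed.

Lemma iterT (H : HilbertSpace) (x : H) m :
  Nat.iter m (fun y => vscal c2 y) x = vscal (cr (2 ^ m)) x.
Proof.
  induction m; simpl.
  - symmetry. apply vscal_1.
  - rewrite IHm, vscal_assoc. f_equal. unfold Cmul, c2, cr; simpl; f_equal; ring.
Qed.

Lemma lin2 (H : HilbertSpace) (c : nat -> Defs.C) (e : nat -> H) k :
  (forall i, (i >= 2)%nat -> c i = Defs.C0) ->
  lincomb (k + 2) c e = vadd (vadd vzero (vscal (c 0%nat) (e 0%nat))) (vscal (c 1%nat) (e 1%nat)).
Proof.
  intros Hc. induction k.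
  - reflexivity.
  - simpl (S k + 2)%nat. simpl lincomb. simpl lincomb in IHk.
    rewrite IHk. rewrite (Hc (k+2)%nat) by lia. rewrite vscal0, vadd_0. reflexivity.
Qed.

Theorem mainTheorem10 :
  forall (H : HilbertSpace) (n : nat), (2 <= n)%nat -> has_dim H n ->
  exists (T : H -> H) (M : H -> Prop),
    bounded_linear T /\ subspace M /\ nontrivial M /\ M_diskcyclic T M.
Proof.
  intros H n Hn [e [Hind _]].
  assert (Hk : n = ((n - 2) + 2)%nat) by lia.
  exists (fun y => vscal c2 y), (fun y => exists c, y = vscal c (e 0%nat)).
  split; [|split; [|split]].
  - split; [|split].
    + intros; apply vscal_distr_v.
    + intros a x. rewrite !vscal_assoc. f_equal. unfold Cmul, c2; destruct a; simpl; f_equal; ring.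
    + exists 2. intros x. unfold vnorm.
      rewrite inner_scal_l, inner_conj_sym, inner_scal_l.
      destruct (inner x x) as [r i] eqn:Ei. simpl.
      replace (2 * (2 * r - 0 * i) - 0 * - (2 * i + 0 * r)) with (2*2 * r) by ring.
      pose proof (inner_pos H x) as Hp. rewrite Ei in Hp; simpl in Hp.
      rewrite sqrt_mult by lra. rewrite sqrt_square by lra. lra.
  - split; [|split].
    + exists Defs.C0. symmetry; apply vscal0.
    + intros x y [a ->] [b ->]. exists (Cadd a b). symmetry; apply vscal_distr_s.
    + intros a x [b ->]. exists (Cmul a b). apply vscal_assoc.
  - split.
    + exists (e 0%nat). split. exists Defs.C1. symmetry; apply vscal_1.
      intros E0.
      set (c := fun i : nat => (if Nat.eqb i 0 then Defs.C1 else Defs.C0) : Defs.C).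
      assert (L : lincomb n c e = vzero).
      { rewrite Hk, lin2.
        - simpl. rewrite E0, vscal_1, !vscal0, !vadd_0. reflexivity.
        - intros i Hi. unfold c. destruct (Nat.eqb_spec i 0); [lia|reflexivity]. }
      pose proof (Hind c L 0%nat ltac:(lia)) as F. unfold c in F; simpl in F.
      injection F. lra.
    + exists (e 1%nat). intros [a Ea].
      set (c := fun i : nat => (if Nat.eqb i 0 then a else if Nat.eqb i 1 then mkC (-1) 0 else Defs.C0) : Defs.C).
      assert (L : lincomb n c e = vzero).
      { rewrite Hk, lin2.
        - simpl. rewrite Ea, vscal_assoc.
          rewrite (vadd_comm H vzero), vadd_0, <- vscal_distr_s.
          replace (Cadd (c 0%nat) (Cmul (c 1%nat) a)) with Defs.C0. apply vscal0.
          unfold c; simpl.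
          destruct a; unfold Cadd, Cmul, Defs.C0; simpl; f_equal; ring.
        - intros i Hi. unfold c. destruct (Nat.eqb_spec i 0); [lia|].
          destruct (Nat.eqb_spec i 1); [lia|reflexivity]. }
      pose proof (Hind c L 1%nat ltac:(lia)) as F. unfold c in F; simpl in F.
      injection F. lra.
  - exists (e 0%nat). intros y [a Ea] eps Heps. exists y. split.
    + split; [|exists a; exact Ea].
      set (s := Re a * Re a + Im a * Im a).
      destruct (Pow_x_infinity 2 ltac:(rewrite Rabs_pos_eq; lra) s) as [N HN].
      specialize (HN N (le_n N)). rewrite Rabs_pos_eq in HN by (apply pow_le; lra).
      assert (P1 : 1 <= 2 ^ N) by (apply pow_R1_Rle; lra).
      exists (mkC (Re a / 2 ^ N) (Im a / 2 ^ N)), N. split.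
      * unfold Cmod; simpl. rewrite <- sqrt_1. apply sqrt_le_1_alt.
        assert (Hs : s <= 2^N * 2^N) by nra. unfold s in Hs.
        apply (Rmult_le_reg_r (2^N * 2^N)); [nra|].
        field_simplify; [lra| lra].
      * rewrite iterT, vscal_assoc, Ea. f_equal. destruct a as [ar ai]; unfold Cmul, cr; simpl.
        f_equal; field; lra.
    + unfold vnorm, vsub. rewrite vadd_opp, inner00, sqrt_0. lra.
Qed.
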